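(* Let $L$ be a regular Lie algebra (finite-dimensional, over an infinite field $K$) and let $I$ be an ideal of $L$ with $0\neq I\neq L$. Then the quotient algebra $L/I$ is nilpotent.
   Context: All algebras are finite-dimensional over an infinite field $K$. For $x\in L$ write $\chi_{\operatorname{ad} x}(t)=\det(t-\operatorname{ad}x)=\sum_{i}a_i(x)t^i$. The rank $\operatorname{rk}L$ is the minimal $r$ such that $a_r(x)\neq 0$ for some $x\in L$. An element $x$ is regular if $a_{\operatorname{rk}L}(x)\neq 0$. A Lie algebra is regular if each of its nonzero elements is regular. *)

(* Defs.v *)
From HB Require Import structures.
From mathcomp Require Import all_boot all_order all_algebra.
Set Implicit Arguments. Unset Strict Implicit. Unset Printing Implicit Defensive.
Import GRing.Theory.
Local Open Scope ring_scope.

(* A Lie algebra of dimension n over K, presented on the coordinate space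
   'rV[K]_n by its bracket. *)
Definition is_lie_bracket (K : fieldType) (n : nat)
  (br : 'rV[K]_n -> 'rV[K]_n -> 'rV[K]_n) : Prop :=
  [/\ (forall (a : K) x y z, br (a *: x + y) z = a *: br x z + br y z),
      (forall (a : K) x y z, br z (a *: x + y) = a *: br z x + br z y),
      (forall x, br x x = 0)
    & (forall x y z, br x (br y z) + br y (br z x) + br z (br x y) = 0)].

Definition infinite_field (K : fieldType) : Prop :=
  forall s : seq K, exists x : K, x \notin s.

Definition ad_mx (K : fieldType) (n : nat)
  (br : 'rV[K]_n -> 'rV[K]_n -> 'rV[K]_n) (x : 'rV[K]_n) : 'M[K]_n :=
  lin1_mx (br x).

Definition chi_coef (K : fieldType) (n : nat)
  (br : 'rV[K]_n -> 'rV[K]_n -> 'rV[K]_n) (i : nat) (x : 'rV[K]_n) : K :=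
  (char_poly (ad_mx br x))`_i.

Definition is_lie_rank (K : fieldType) (n : nat)
  (br : 'rV[K]_n -> 'rV[K]_n -> 'rV[K]_n) (r : nat) : Prop :=
  (exists x, chi_coef br r x != 0) /\
  (forall r', (r' < r)%N -> forall x, chi_coef br r' x = 0).

Definition regular_elt (K : fieldType) (n : nat)
  (br : 'rV[K]_n -> 'rV[K]_n -> 'rV[K]_n) (x : 'rV[K]_n) : Prop :=
  exists r, is_lie_rank br r /\ chi_coef br r x != 0.

Definition regular_lie (K : fieldType) (n : nat)
  (br : 'rV[K]_n -> 'rV[K]_n -> 'rV[K]_n) : Prop :=
  forall x : 'rV[K]_n, x != 0 -> regular_elt br x.

(* I (the row space of the matrix I) is an ideal of L. *)
Definition is_lie_ideal (K : fieldType) (n : nat)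
  (br : 'rV[K]_n -> 'rV[K]_n -> 'rV[K]_n) (I : 'M[K]_n) : Prop :=
  forall x v : 'rV[K]_n, (v <= I)%MS -> (br x v <= I)%MS.

Definition iter_br (K : fieldType) (n : nat)
  (br : 'rV[K]_n -> 'rV[K]_n -> 'rV[K]_n) (xs : seq 'rV[K]_n) (y : 'rV[K]_n) :=
  foldr br y xs.

(* L/I is nilpotent: for some k, every k-fold bracket of elements of L/I
   vanishes, i.e. every k-fold bracket of representatives lies in I. *)
Definition quotient_nilpotent (K : fieldType) (n : nat)
  (br : 'rV[K]_n -> 'rV[K]_n -> 'rV[K]_n) (I : 'M[K]_n) : Prop :=
  exists k : nat, forall (xs : seq 'rV[K]_n) (y : 'rV[K]_n),
    size xs = k -> (iter_br br xs y <= I)%MS.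

(* Main.v *)
Require Import Defs.
From mathcomp Require Import all_boot all_order all_algebra.
Local Open Scope ring_scope.
From mathcomp Require Import all_boot all_order all_algebra.
From Stdlib Require Import Classical Lia.
From mathcomp Require Import zify.
Set Implicit Arguments. Unset Strict Implicit. Unset Printing Implicit Defensive.
Import GRing.Theory.
Local Open Scope ring_scope.

Section Basic.
Variables (K : fieldType) (n : nat) (br : 'rV[K]_n -> 'rV[K]_n -> 'rV[K]_n).
Hypothesis HL : is_lie_bracket br.

Lemma br0l z : br 0 z = 0.
Proof.
have [Hl _ _ _] := HL; have := Hl 1 0 0 z; rewrite !scale1r addr0 => E.
by have := congr1 (fun t => t - br 0 z) E; rewrite subrr addrK => /esym.
Qed.
Lemma br0r z : br z 0 = 0.
Proof.
have [_ Hr _ _] := HL; have := Hr 1 0 0 z; rewrite !scale1r addr0 => E.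
by have := congr1 (fun t => t - br z 0) E; rewrite subrr addrK => /esym.
Qed.
Lemma brDl x y z : br (x + y) z = br x z + br y z.
Proof. by have [Hl _ _ _] := HL; rewrite -[x]scale1r Hl !scale1r. Qed.
Lemma brDr x y z : br z (x + y) = br z x + br z y.
Proof. by have [_ Hr _ _] := HL; rewrite -[x]scale1r Hr !scale1r. Qed.
Lemma brZl a x z : br (a *: x) z = a *: br x z.
Proof. by have [Hl _ _ _] := HL; rewrite -[a *: x]addr0 Hl br0l addr0. Qed.
Lemma brZr a x z : br z (a *: x) = a *: br z x.
Proof. by have [_ Hr _ _] := HL; rewrite -[a *: x]addr0 Hr br0r addr0. Qed.
Lemma br_anti x y : br x y = - br y x.
Proof.
have [_ _ Ha _] := HL; have := Ha (x + y).
rewrite brDl !brDr !Ha add0r addr0 => /eqP; rewrite addr_eq0 => /eqP //.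
Qed.
Lemma brNr x z : br z (- x) = - br z x.
Proof. by rewrite -scaleN1r brZr scaleN1r. Qed.
Lemma brNl x z : br (- x) z = - br x z.
Proof. by rewrite -scaleN1r brZl scaleN1r. Qed.
Lemma brBr x y z : br z (x - y) = br z x - br z y.
Proof. by rewrite brDr brNr. Qed.
Lemma br_jac h v u : br h (br v u) = br (br h v) u + br v (br h u).
Proof.
have [_ _ _ J] := HL; have := J h v u.
rewrite [br u h]br_anti brNr [br u (br h v)]br_anti.
move/eqP; rewrite -addrA -opprD subr_eq0 => /eqP ->; by rewrite addrC.
Qed.
End Basic.

Lemma ex_max_classic (P : nat -> Prop) b :
  (exists j, P j) -> (forall j, P j -> (j <= b)%N) ->
  exists j, P j /\ forall j', P j' -> (j' <= j)%N.
Proof.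
move=> [j0 Pj0] Hb.
have: forall k j, (b - j <= k)%N -> P j -> exists j, P j /\ forall j', P j' -> (j' <= j)%N.
  elim=> [|k IHk] j Hk Pj.
    exists j; split=> // j' Pj'; apply: leq_trans (Hb _ Pj') _; lia.
  case: (classic (exists j', P j' /\ (j < j')%N)) => [[j' [Pj' ltj]]|N].
    apply: (IHk j') => //; have := Hb _ Pj'; lia.
  exists j; split=> // j' Pj'; rewrite leqNgt; apply/negP=> lt; apply: N; by exists j'.
by move/(_ (b - j0)%N j0 (leqnn _) Pj0).
Qed.

Section Engel.
Variables (K : fieldType) (n : nat) (br : 'rV[K]_n -> 'rV[K]_n -> 'rV[K]_n).
Variables (I : 'M[K]_n) (N : nat).
Hypothesis HL : is_lie_bracket br.
Hypothesis HI : is_lie_ideal br I.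
Hypothesis NIL : forall z v, (iter N (br z) v <= I)%MS.

Definition subalg (H : 'M[K]_n) := forall u v, (u <= H)%MS -> (v <= H)%MS -> (br u v <= H)%MS.
Definition stab (H W : 'M[K]_n) := forall h w, (h <= H)%MS -> (w <= W)%MS -> (br h w <= W)%MS.

Lemma sub_oppr m (x : 'M[K]_(m, n)) (W : 'M[K]_n) : (x <= W)%MS -> (- x <= W)%MS.
Proof. by move=> h; rewrite (eqmx_opp x). Qed.

Lemma engel_base (H W M : 'M[K]_n) : (H <= I)%MS -> (I <= W)%MS -> ~~ (M <= W)%MS ->
  exists v : 'rV[K]_n, [/\ (v <= M)%MS, ~~ (v <= W)%MS & forall h, (h <= H)%MS -> (br h v <= W)%MS].
Proof.
move=> HsI IW /row_subPn [i Hi]; exists (row i M); split=> //; first exact: row_sub.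
move=> h hH; rewrite (br_anti HL); apply: submx_trans IW; apply: sub_oppr.
by apply: HI; apply: submx_trans HsI.
Qed.

Lemma engel d : forall H W M : 'M[K]_n, (\rank H <= d)%N -> (I <= H)%MS -> subalg H ->
  (I <= W)%MS -> stab H W -> stab H M -> ~~ (M <= W)%MS ->
  exists v : 'rV[K]_n, [/\ (v <= M)%MS, ~~ (v <= W)%MS & forall h, (h <= H)%MS -> (br h v <= W)%MS].
Proof.
elim: d => [|d IH] H W M rH IH_ sH IW stW stM nMW.
  apply: engel_base => //; move: rH; rewrite leqn0 mxrank_eq0 => /eqP ->; exact: sub0mx.
have [HsI|nHI] := boolP (H <= I)%MS; first exact: engel_base.
pose P j := exists H' : 'M[K]_n, [/\ subalg H', (I <= H')%MS, (H' <= H)%MS, ~~ (H <= H')%MS & \rank H' = j].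
have [jm [[H' [sH' IH' H'H nHH' erH']] maxj]] : exists j, P j /\ forall j', P j' -> (j' <= j)%N.
  apply: (ex_max_classic (b := n)).
    exists (\rank I), I; split=> //.
    - by move=> u v uI vI; apply: HI.
  by move=> j' [H2 [_ _ _ _ <-]]; exact: rank_leq_col.
have ltH : (\rank H' < \rank H)%N by apply: rank_ltmx; rewrite ltmxE H'H.
have rH' : (\rank H' <= d)%N by rewrite -ltnS; apply: leq_trans rH.
have stH'H : stab H' H by move=> h w hH' wH; apply: sH => //; apply: submx_trans H'H.
have [v [vH nvH' brv]] := IH H' H' H rH' IH' sH' IH' sH' stH'H nHH'.
pose S := (H' + v)%MS.
have HS : (H <= S)%MS.
  apply/negPn/negP => nHS.
  have PS : P (\rank S).
    exists S; split.
    - move=> x y /sub_addsmxP [[a b] ->] /sub_addsmxP [[c e] ->] /=.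
      rewrite (mx11_scalar b) (mx11_scalar e) !mul_scalar_mx.
      rewrite !(brDl HL) !(brDr HL) !(brZl HL) !(brZr HL).
      have [_ _ Ha _] := HL; rewrite Ha !scaler0 addr0.
      have h1 : (a *m H' <= H')%MS by exact: submxMl.
      have h2 : (c *m H' <= H')%MS by exact: submxMl.
      rewrite [br v _](br_anti HL).
      apply: addmx_sub; [apply: addmx_sub|].
      + apply: submx_trans (addsmxSl _ _); exact: sH'.
      + apply: scalemx_sub; apply: submx_trans (addsmxSl _ _); exact: brv.
      + apply: scalemx_sub; apply: sub_oppr; apply: submx_trans (addsmxSl _ _); exact: brv.
    - exact: submx_trans IH' (addsmxSl _ _).
    - by rewrite addsmx_sub H'H vH.
    - exact: nHS.
    - by [].
  have := maxj _ PS; rewrite leqNgt => /negP; apply; rewrite -erH'.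
  apply: rank_ltmx; rewrite ltmxE addsmxSl /=; apply/negP => SH'.
  by move/negP: nvH'; apply; apply: submx_trans SH'; exact: addsmxSr.
have stH'W : stab H' W by move=> h w hH' wW; apply: stW => //; apply: submx_trans H'H.
have stH'M : stab H' M by move=> h w hH' wW; apply: stM => //; apply: submx_trans H'H.
have [u0 [u0M nu0W bru0]] := IH H' W M rH' IH' sH' IW stH'W stH'M nMW.
pose u j := iter j (br v) u0.
have Hu : forall j, (u j <= M)%MS /\ forall h, (h <= H')%MS -> (br h (u j) <= W)%MS.
  elim=> [|j [ujM bruj]] //=; split; first by apply: stM.
  move=> h hH'; rewrite (br_jac HL); apply: addmx_sub.
    by apply: bruj; apply: brv.
  by apply: stW => //; apply: bruj.
have exW : exists j, (u j <= W)%MS by exists N; apply: submx_trans IW; exact: NIL.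
case: (ex_minnP exW) => j0 uj0W minj0.
case: j0 uj0W minj0 => [|j] ujW minj; first by rewrite ujW in nu0W.
have nujW : ~~ (u j <= W)%MS.
  by apply/negP => /minj; rewrite ltnn.
exists (u j); split=> //; first by case: (Hu j).
move=> h hH; have /sub_addsmxP [[a b] ->] := submx_trans hH HS.
rewrite (mx11_scalar b) mul_scalar_mx (brDl HL) (brZl HL).
apply: addmx_sub; first by case: (Hu j) => _; apply; exact: submxMl.
by apply: scalemx_sub.
Qed.

End Engel.

Lemma nil_of_engel (K : fieldType) (n : nat) (br : 'rV[K]_n -> 'rV[K]_n -> 'rV[K]_n)
  (I : 'M[K]_n) (N : nat) :
  is_lie_bracket br -> is_lie_ideal br I ->
  (forall z v, (iter N (br z) v <= I)%MS) -> quotient_nilpotent br I.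
Proof.
move=> HL HI NIL.
pose Sc c (W : 'M[K]_n) := forall xs w, size xs = c -> (w <= W)%MS -> (iter_br br xs w <= I)%MS.
suff: forall d (W : 'M[K]_n), (n - \rank W <= d)%N -> is_lie_ideal br W -> (I <= W)%MS ->
   (exists c, Sc c W) -> quotient_nilpotent br I.
  move=> H; apply: (H n I) => //; first exact: leq_subr.
  by exists 0%N => xs w /size0nil -> .
elim=> [|d IHd] W rW idW IW [c Sc_W].
  exists c => xs y sxs; apply: Sc_W => //; apply: submx_trans (submx1 _) _.
  rewrite sub1mx /row_full eqn_leq rank_leq_col /=; move: rW; lia.
have [full|nfull] := boolP (1%:M <= W)%MS.
  by exists c => xs y sxs; apply: Sc_W => //; apply: submx_trans full; exact: submx1.
have [v [_ nvW brv]] := engel HL HI NIL (d := n) (H := 1%:M) (W := W) (M := 1%:M)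
   (ltac:(by rewrite mxrank1)) (submx1 _) (fun u v _ _ => submx1 _) IW
   (fun h w _ wW => idW h w wW) (fun h w _ _ => submx1 _) nfull.
have brW : forall x w, (w <= W + v)%MS -> (br x w <= W)%MS.
  move=> x w /sub_addsmxP [[a b] ->] /=.
  rewrite (mx11_scalar b) mul_scalar_mx (brDr HL) (brZr HL).
  apply: addmx_sub; first by apply: idW; exact: submxMl.
  by apply: scalemx_sub; apply: brv; exact: submx1.
apply: (IHd (W + v)%MS).
- have : (\rank W < \rank (W + v)%MS)%N.
    apply: rank_ltmx; rewrite ltmxE addsmxSl /=; apply/negP => sW.
    by move/negP: nvW; apply; apply: submx_trans sW; exact: addsmxSr.
  move: rW; lia.
- by move=> x w wW; apply: submx_trans (addsmxSl _ _); apply: brW.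
- exact: submx_trans IW (addsmxSl _ _).
exists c.+1 => xs w; case/lastP: xs => [|xs x] //; rewrite size_rcons => -[sxs] wW.
by rewrite /iter_br foldr_rcons; apply: Sc_W => //; apply: brW.
Qed.

Lemma uniq_seq_inf (K : fieldType) : infinite_field K -> forall N, exists s : seq K, uniq s /\ size s = N.
Proof.
move=> Hinf; elim=> [|N [s [us ss]]]; first by exists [::].
have [x xs] := Hinf s; exists (x :: s); by rewrite /= xs us ss.
Qed.

Lemma nonroot (K : fieldType) : infinite_field K -> forall p : {poly K}, p != 0 -> exists t, ~~ root p t.
Proof.
move=> Hinf p p0; have [s [us ss]] := uniq_seq_inf Hinf (size p).
case: (boolP (all (root p) s)) => [alls|].
  by have := max_poly_roots p0 alls us; rewrite ss ltnn.
by case/allPn => t _ nt; exists t.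
Qed.

Lemma coefM_low (K : fieldType) (p q : {poly K}) a b : p`_a != 0 -> q`_b != 0 ->
  exists i, (i <= a + b)%N /\ (p * q)`_i != 0.
Proof.
move=> pa qb.
have exp : exists i, p`_i != 0 by exists a.
have exq : exists i, q`_i != 0 by exists b.
case: (ex_minnP exp) => al pal minp; case: (ex_minnP exq) => be qbe minq.
exists (al + be)%N; split; first by rewrite leq_add ?minp ?minq.
rewrite coefM (bigD1 (Ordinal (ltn_addr be (ltnSn al)))) //= addKn big1 ?addr0 ?mulf_neq0 //.
move=> [j lj] /= nj.
have [ltj|gtj] := ltnP j al.
  have : p`_j = 0 by apply/eqP; apply/negP => /negP/minp; rewrite leqNgt ltj.
  by move->; rewrite mul0r.
have ltb : (al + be - j < be)%N.
  have : j != al by apply: contraNneq nj => ej; apply/eqP/val_inj.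
  move: gtj (lj); lia.
have : q`_(al + be - j) = 0 by apply/eqP; apply/negP => /negP/minq; rewrite leqNgt ltb.
by move->; rewrite mulr0.
Qed.

Lemma char_poly_line (K : fieldType) p (A B : 'M[K]_p) i :
  exists f : {poly K}, forall t, (char_poly (A + t *: B))`_i = f.[t].
Proof.
pose Ap : 'M[{poly K}]_p := map_mx polyC A + 'X *: map_mx polyC B.
exists (char_poly Ap)`_i => t.
have -> : A + t *: B = map_mx (horner_eval t) Ap.
  by apply/matrixP => u v; rewrite !mxE /horner_eval !hornerE.
by rewrite -map_char_poly coef_map.
Qed.

Lemma char_poly_conj (K : fieldType) p (P A : 'M[K]_p) : P \in unitmx ->
  char_poly (P *m A *m invmx P) = char_poly A.
Proof.
move=> Pu; rewrite /char_poly /char_poly_mx.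
pose Pc := map_mx (@polyC K) P; pose Qc := map_mx (@polyC K) (invmx P).
have PQ : Pc *m Qc = 1%:M by rewrite -map_mxM mulmxV // map_mx1.
have -> : 'X%:M - map_mx polyC (P *m A *m invmx P) = Pc *m ('X%:M - map_mx polyC A) *m Qc.
  rewrite mulmxBr mulmxBl !map_mxM; congr (_ - _).
  by rewrite mul_mx_scalar -scalemxAl PQ scalemx1.
rewrite !det_mulmx mulrC mulrA -det_mulmx.
by rewrite -map_mxM mulVmx // map_mx1 det1 mul1r.
Qed.

Lemma char_poly_lblock (K : fieldType) m k (A : 'M[K]_m) (C : 'M[K]_(k, m)) (B : 'M[K]_k) :
  char_poly (block_mx A 0 C B) = char_poly A * char_poly B.
Proof.
rewrite /char_poly /char_poly_mx map_block_mx (scalar_mx_block m k) opp_block_mx add_block_mx.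
by rewrite map_mx0 subr0 det_lblock.
Qed.

Lemma CH0 (K : fieldType) p (A : 'M[K]_p) : char_poly A = 'X^p -> A ^+ p = 0.
Proof.
case: p A => [|p] A e; first by apply/matrixP => [[]].
by have := Cayley_Hamilton A; rewrite e rmorphXn /= horner_mx_X.
Qed.

Lemma ad_mxE (K : fieldType) n (br : 'rV[K]_n -> 'rV[K]_n -> 'rV[K]_n) :
  is_lie_bracket br -> forall v z, v *m ad_mx br z = br z v.
Proof.
move=> HL v z; rewrite /ad_mx /lin1_mx.
rewrite [v in RHS]matrix_sum_delta big_ord1.
rewrite (big_morph (br z) (fun x y => brDr HL x y z) (br0r HL z)).
apply/rowP=> j; rewrite mxE summxE; apply: eq_bigr => i _.
by rewrite (brZr HL) !mxE.
Qed.

Lemma ad_lin (K : fieldType) n (br : 'rV[K]_n -> 'rV[K]_n -> 'rV[K]_n) :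
  is_lie_bracket br -> forall a x y, ad_mx br (a *: x + y) = a *: ad_mx br x + ad_mx br y.
Proof.
move=> HL a x y; have [Hl _ _ _] := HL.
by apply/matrixP => i j; rewrite /ad_mx /lin1_mx !mxE Hl !mxE.
Qed.

Lemma pow_block (K : fieldType) m k (X : 'M[K]_(m + k)) : ursubmx X = 0 ->
  forall j, ursubmx (X ^+ j) = 0 /\ drsubmx (X ^+ j) = (drsubmx X) ^+ j.
Proof.
move=> ur; elim=> [|j [urj drj]].
  by rewrite !expr0 -[1]/(1%:M : 'M_(m + k)) (scalar_mx_block m k) block_mxKur block_mxKdr.
rewrite !exprSr -!mulmxE -[X ^+ j]submxK -[X in _ *m X]submxK urj ur mulmx_block.
by rewrite block_mxKur block_mxKdr mulmx0 mul0mx mulmx0 !add0r drj.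
Qed.

Lemma iter_ad (K : fieldType) n (br : 'rV[K]_n -> 'rV[K]_n -> 'rV[K]_n) :
  is_lie_bracket br -> forall z v j, iter j (br z) v = v *m (ad_mx br z) ^+ j.
Proof.
move=> HL z v; elim=> [|j IH]; first by rewrite expr0 mulmx1.
by rewrite iterS IH exprSr -mulmxE mulmxA ad_mxE.
Qed.

Section Main.
Variables (K : fieldType) (m k : nat) (br : 'rV[K]_(m + k) -> 'rV[K]_(m + k) -> 'rV[K]_(m + k)).
Variable (I : 'M[K]_(m + k)).
Hypothesis HL : is_lie_bracket br.
Hypothesis HI : is_lie_ideal br I.
Hypothesis rkI : \rank I = m.

Let P := row_ebase I.
Let Pinv := invmx (row_ebase I).
Let Pu : P \in unitmx := row_ebase_unit I.
Definition Mz z := P *m ad_mx br z *m Pinv.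

Lemma M_lin a x y : Mz (a *: x + y) = a *: Mz x + Mz y.
Proof. by rewrite /Mz ad_lin // mulmxDr mulmxDl -!scalemxAr -scalemxAl. Qed.

Lemma rsub0 p (U : 'M_(p, m + k)) : (U <= I)%MS -> rsubmx (U *m Pinv) = 0.
Proof.
move=> UI; have : (U <= row_base I)%MS by rewrite eq_row_base.
case/submxP => a ->; rewrite /row_base -mulmxA mulmxK //.
apply/matrixP => i j; rewrite !mxE big1 // => l _; rewrite mxE.
have lm : (l < m)%N by move: (ltn_ord l); rewrite [X in (_ < X)%N -> _]rkI.
rewrite (_ : (l == rshift m j :> nat) = false) ?mulr0 //.
by apply/negbTE; rewrite neq_ltn /= (leq_trans lm) // leq_addr.
Qed.

Lemma rowP_I (i : 'I_(m + k)) : (i < m)%N -> (row i P <= I)%MS.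
Proof.
move=> im; have im' : (i < \rank I)%N by rewrite [X in (_ < X)%N]rkI.
have : (row (Ordinal im') (row_base I) <= I)%MS.
  by apply: submx_trans (row_sub _ _) _; rewrite eq_row_base.
suff -> : row (Ordinal im') (row_base I) = row i P by [].
apply/rowP => j; rewrite !mxE (bigD1 i) //= big1 ?addr0.
  by rewrite mxE eqxx im' mul1r.
move=> l nl; rewrite mxE.
suff -> : (i == l :> nat) = false by rewrite mul0r.
by apply/negbTE; apply: contra nl => /eqP e; apply/eqP/val_inj.
Qed.

Lemma usubP_I : (usubmx P <= I)%MS.
Proof.
by apply/row_subP => i; rewrite row_usubmx; apply: rowP_I => /=; exact: ltn_ord.
Qed.

Lemma ur0 z : ursubmx (Mz z) = 0.
Proof.
rewrite /ursubmx /Mz -[P](vsubmxK P) !mul_col_mx col_mxKu.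
apply: rsub0; apply/row_subP => i; rewrite row_mul ad_mxE //; apply: HI.
by apply: submx_trans usubP_I; exact: row_sub.
Qed.

Definition A11 z := ulsubmx (Mz z).
Definition A22 z := drsubmx (Mz z).

Lemma chi_split z : char_poly (ad_mx br z) = char_poly (A11 z) * char_poly (A22 z).
Proof.
rewrite -(char_poly_conj _ Pu) -/(Mz z) -[Mz z]submxK ur0 char_poly_lblock //.
Qed.

Lemma A22_I x : (x <= I)%MS -> A22 x = 0.
Proof.
move=> xI.
have : rsubmx (Mz x) = 0.
  apply: rsub0; apply/row_subP => i; rewrite row_mul ad_mxE // br_anti //.
  by apply: sub_oppr; apply: HI.
move=> H; apply/matrixP => i j; have := congr1 (fun X : 'M[K]_(m + k, k) => X (rshift m i) j) H.
by rewrite !mxE.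
Qed.

Lemma A_lin a x y : A11 (a *: x + y) = a *: A11 x + A11 y /\ A22 (a *: x + y) = a *: A22 x + A22 y.
Proof. by rewrite /A11 /A22 M_lin; split; apply/matrixP => i j; rewrite !mxE. Qed.

Lemma Mpow z j : (Mz z) ^+ j = P *m (ad_mx br z) ^+ j *m Pinv.
Proof.
elim: j => [|j IH]; first by rewrite !expr0 mulmx1 mulmxV.
rewrite exprSr IH /Mz -mulmxE !mulmxA mulmxKV // exprSr -mulmxE !mulmxA //.
Qed.

Lemma nil_of_chi z v : char_poly (A22 z) = 'X^k -> (iter k (br z) v <= I)%MS.
Proof.
move=> e; rewrite iter_ad //.
have E : (ad_mx br z) ^+ k = Pinv *m (Mz z) ^+ k *m P.
  by rewrite Mpow !mulmxA mulVmx // mul1mx mulmxKV.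
have [urk drk] := pow_block (ur0 z) k.
rewrite -/(A22 z) CH0 // in drk.
rewrite E -[(Mz z) ^+ k]submxK urk drk !mulmxA -[v *m Pinv](hsubmxK (v *m Pinv)).
rewrite mul_row_block !mulmx0 addr0 -[P](vsubmxK P) mul_row_col mul0mx addr0.
by apply: submx_trans usubP_I; exact: submxMl.
Qed.


Lemma all_nil : infinite_field K -> regular_lie br -> (0 < m)%N ->
  forall z, char_poly (A22 z) = 'X^k.
Proof.
move=> Hinf Hreg m0.
have [i nz] : exists i, row i I != 0.
  case: (pickP (fun i => row i I != 0)) => [i ?|H]; first by exists i.
  have I0 : I = 0.
    by apply/row_matrixP => i; rewrite row0; move/negbFE: (H i) => /eqP.
  by move: m0; rewrite -[X in (0 < X)%N]rkI I0 mxrank0.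
set x1 := row i I; have x1I : (x1 <= I)%MS by exact: row_sub.
have [r [[_ rmin] cr]] := Hreg x1 nz.
have cp0 : char_poly (0 : 'M[K]_k) = 'X^k.
  by rewrite /char_poly /char_poly_mx map_mx0 subr0 det_scalar.
move: cr; rewrite /chi_coef chi_split A22_I // cp0 coefMXn.
case: ltnP => [|rk cr]; first by rewrite eqxx.
move=> z2; case: (eqVneq (char_poly (A22 z2)) 'X^k) => // nq; exfalso.
have [b qb] : exists b : 'I_k, (char_poly (A22 z2))`_b != 0.
  case: (pickP (fun b : 'I_k => (char_poly (A22 z2))`_b != 0)) => [b ?|H]; first by exists b.
  exfalso; move/eqP: nq; apply; apply/polyP => j; rewrite coefXn.
  case: (ltngtP j k) => [jk|kj|->].
  - by move/negbFE: (H (Ordinal jk)) => /eqP.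
  - by rewrite nth_default // size_char_poly.
  have := char_poly_monic (A22 z2); rewrite monicE lead_coefE size_char_poly /= => /eqP ->.
  by rewrite ?eqxx.
have [f Hf] := char_poly_line (A11 x1) (A11 (z2 - x1)) (r - k).
have [g Hg] := char_poly_line (A22 x1) (A22 (z2 - x1)) b.
have f0 : f != 0.
  by apply: contraNneq cr => f0; rewrite -[A11 x1]addr0 -(scale0r (A11 (z2 - x1))) Hf f0 horner0.
have g0 : g != 0.
  apply: contraNneq qb => g0.
  have -> : A22 z2 = A22 x1 + 1 *: A22 (z2 - x1).
    by have [_ e] := A_lin 1 (z2 - x1) x1; rewrite addrC -e scale1r subrK.
  by rewrite Hg g0 horner0.
have [t nt] := nonroot Hinf (mulf_neq0 f0 g0).
move: nt; rewrite rootM negb_or => /andP [ft gt].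
pose z := t *: (z2 - x1) + x1.
have [e1 e2] := A_lin t (z2 - x1) x1.
have pa : (char_poly (A11 z))`_(r - k) != 0 by rewrite /z e1 addrC Hf.
have qb' : (char_poly (A22 z))`_b != 0 by rewrite /z e2 addrC Hg.
have [j [jle cj]] := coefM_low pa qb'.
move: cj; rewrite -chi_split; apply/negP; rewrite negbK; apply/eqP.
apply: rmin; move: jle rk (ltn_ord b); lia.
Qed.

End Main.

Lemma main_mk (K : fieldType) (m k : nat) (br : 'rV[K]_(m + k) -> 'rV[K]_(m + k) -> 'rV[K]_(m + k))
  (I : 'M[K]_(m + k)) :
  infinite_field K -> is_lie_bracket br -> regular_lie br -> is_lie_ideal br I ->
  \rank I = m -> (0 < m)%N -> quotient_nilpotent br I.
Proof.
move=> Hinf HL Hreg HI rkI m0.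
apply: (nil_of_engel (N := k) HL HI) => z v.
by apply: nil_of_chi => //; apply: all_nil.
Qed.

Unset Implicit Arguments.
Set Strict Implicit.

Theorem lemma4 (K : fieldType) (n : nat)
  (br : 'rV[K]_n -> 'rV[K]_n -> 'rV[K]_n) (I : 'M[K]_n) :
  infinite_field K ->
  is_lie_bracket br ->
  regular_lie br ->
  is_lie_ideal br I ->
  (0 < \rank I)%N -> (\rank I < n)%N ->
  quotient_nilpotent br I.
Proof.
move=> Hinf HL Hreg HI m0 _.
suff H : forall n' m k (e : (m + k)%N = n') (br : 'rV[K]_n' -> 'rV[K]_n' -> 'rV[K]_n') (I : 'M[K]_n'),
  is_lie_bracket br -> regular_lie br -> is_lie_ideal br I -> \rank I = m -> (0 < m)%N ->
  quotient_nilpotent br I.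
  exact: (H n (\rank I) (n - \rank I)%N (subnKC (rank_leq_col I)) br I HL Hreg HI erefl m0).
move=> n' m k e; case: n' / e => br' I' HL' Hreg' HI' rkI m0'.
exact: main_mk.
Qed.
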